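(* Let $f=a_1+2a_2+4a_3\in\mathcal{GB}_n^8$ with $a_1,a_2,a_3\in\mathcal{B}_n$. If $f$ is gbent, then its Gray image $\psi(f)(\mathbf{x},y_1,y_2)=a_1(\mathbf{x})y_1\oplus a_2(\mathbf{x})y_2\oplus a_3(\mathbf{x})$ is a semibent function in $\mathcal{B}_{n+2}$.
   Context: $\mathcal{B}_m$: Boolean functions $\mathbb{F}_2^m\to\mathbb{F}_2$; $\mathcal{GB}_n^q$: functions $\mathbb{F}_2^n\to\mathbb{Z}_q$ (Boolean values viewed as integers, sum in $\mathbb{Z}_8$). $\mathcal{H}^{(q)}_f(\mathbf{u})=\sum_{\mathbf{x}}\zeta_q^{f(\mathbf{x})}(-1)^{\mathbf{u}\cdot\mathbf{x}}$ with $\zeta_q=e^{2\pi i/q}$; $f$ is gbent if $|\mathcal{H}^{(q)}_f(\mathbf{u})|=2^{n/2}$ for all $\mathbf{u}$. $\mathcal{W}_g(\mathbf{w})=\sum_{\mathbf{z}}(-1)^{g(\mathbf{z})+\mathbf{w}\cdot\mathbf{z}}$. A Boolean function $g$ on $\mathbb{F}_2^m$ is $s$-plateaued if $|\mathcal{W}_g(\mathbf{w})|\in\{0,2^{(m+s)/2}\}$ for all $\mathbf{w}$; it is semibent if it is $1$-plateaued ($m$ odd) or $2$-plateaued ($m$ even). *)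

(* Defs.v *)
From HB Require Import structures.
From mathcomp Require Import all_boot all_order all_algebra all_field.
Set Implicit Arguments. Unset Strict Implicit. Unset Printing Implicit Defensive.
Import Order.TTheory GRing.Theory Num.Theory.
Local Open Scope ring_scope.

Definition dotF2 (n : nat) (u x : 'rV['F_2]_n) : 'F_2 := \sum_(i < n) u 0 i * x 0 i.

(* zeta_8 = e^{2 pi i/8} = (1 + i)/sqrt 2 in algC *)
Definition zeta8 : algC := (1 + 'i) / sqrtC 2.

Definition gWH (n : nat) (f : 'rV['F_2]_n -> 'Z_8) (u : 'rV['F_2]_n) : algC :=
  \sum_(x : 'rV['F_2]_n) zeta8 ^+ (val (f x)) * (-1) ^+ (val (dotF2 u x)).

Definition gbent (n : nat) (f : 'rV['F_2]_n -> 'Z_8) : Prop :=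
  forall u : 'rV['F_2]_n, `|gWH f u| = sqrtC (2 ^+ n).

Definition WH (m : nat) (g : 'rV['F_2]_m -> 'F_2) (w : 'rV['F_2]_m) : int :=
  \sum_(z : 'rV['F_2]_m) (-1) ^+ (val (g z + dotF2 w z)).

Definition plateaued (m s : nat) (g : 'rV['F_2]_m -> 'F_2) : Prop :=
  forall w : 'rV['F_2]_m,
    `|WH g w| = 0 \/ `|WH g w| = (2 ^ ((m + s) %/ 2))%:Z.

Definition semibent (m : nat) (g : 'rV['F_2]_m -> 'F_2) : Prop :=
  if odd m then plateaued 1 g else plateaued 2 g.

Definition gbfun (n : nat) (a1 a2 a3 : 'rV['F_2]_n -> 'F_2) (x : 'rV['F_2]_n) : 'Z_8 :=
  inZp (val (a1 x) + 2 * val (a2 x) + 4 * val (a3 x))%N.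

Definition gray (n : nat) (a1 a2 a3 : 'rV['F_2]_n -> 'F_2) (z : 'rV['F_2]_(n + 2)) : 'F_2 :=
  let x := lsubmx z in let y := rsubmx z in
  a1 x * y 0 0 + a2 x * y 0 1 + a3 x.

(* Main.v *)
Require Import Defs.
From HB Require Import structures.
From mathcomp Require Import all_boot all_order all_algebra all_field.
From mathcomp Require Import zify ring lra.
Import Order.TTheory GRing.Theory Num.Theory.
Local Open Scope ring_scope.
Lemma par (A : int) : exists a, A = 2*a \/ A = 2*a+1.
Proof. exists (A %/ 2)%Z. have := divz_eq A 2. have := modz_ge0 A (isT : 2 != 0 :> int).
have := ltz_pmod A (isT : 0 < 2 :> int). lia. Qed.
Lemma sqpar (A : int) : (exists a, A = 2*a /\ A*A = 4*(a*a)) \/ (exists t, A*A = 8*t+1).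
Proof.
have [a [->|->]] := par A; first by left; exists a; split=>//; ring.
right; have [b [->|->]] := par a.
  by exists (b*(2*b+1)); ring.
by exists ((2*b+1)*(b+1)); ring.
Qed.
Lemma bnd (X : int) k : X*X <= k*k -> 0 <= k -> -k <= X <= k.
Proof. nia. Qed.
Lemma t1 (X : int) : `|X| = 2 -> X = 2 \/ X = -2. lia. Qed.
Lemma t2 (n:nat) : 2 ^+ n = (2 ^ n)%:Z :> int. by rewrite -natz natrX. Qed.
Definition P2 (k : nat) (X : int) := `|X| = 0 \/ `|X| = 2 ^+ k.
Lemma four_sq n (A B C D : int) : A*A+B*B+C*C+D*D = 2^+n -> A*(C-D)+B*(C+D) = 0 ->
  P2 n./2 A /\ P2 n./2 B /\ P2 n./2 C /\ P2 n./2 D.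
Proof.
elim/ltn_ind: n A B C D => -[|[|[|n]]] IH A B C D h1 h2; rewrite /P2 /=.
- rewrite expr0 in h1 *. nia.
- rewrite expr0 expr1 in h1 *. nia.
- rewrite expr1 expr2 in h1 *.
  have [a [Ha|Ha]] := par A; have [b [Hb|Hb]] := par B;
  have [c [Hc|Hc]] := par C; have [d [Hd|Hd]] := par D; subst; nia.
have h3 : 2 ^+ n.+3 = 8 * 2 ^+ n :> int by rewrite !exprS; ring.
rewrite h3 in h1; set K := 2 ^+ n in h1.
have [a [Ha|Ha]] := par A; have [b [Hb|Hb]] := par B;
have [c [Hc|Hc]] := par C; have [d [Hd|Hd]] := par D; subst; try (exfalso; nia).
have e1 : a*a+b*b+c*c+d*d = 2 ^+ n.+1 by rewrite exprS -/K; nia.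
have e2 : a*(c-d)+b*(c+d) = 0 by nia.
have := IH n.+1 (leqnSn _ : (n.+1 < n.+3)%N) a b c d e1 e2; rewrite /P2 /= !normrM !exprS.
have n2 : `|2| = 2 :> int by [].
rewrite n2; lia.
Qed.

Lemma s2 : sqrtC 2 ^+ 2 = 2 :> algC. Proof. by rewrite sqrtCK. Qed.
Lemma s_neq0 : sqrtC 2 != 0 :> algC. Proof. by rewrite sqrtC_eq0 pnatr_eq0. Qed.
Lemma z2 : zeta8 ^+ 2 = 'i.
Proof.
rewrite /zeta8 expr_div_n s2 sqrrD sqrCi expr1n.
have h2 : (2 : algC) != 0 by rewrite pnatr_eq0.
apply: (mulIf h2); rewrite divfK //. 
by ring.
Qed.
Lemma z4 : zeta8 ^+ 4 = -1.
Proof. by rewrite (exprM _ 2 2) z2 sqrCi. Qed.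

Lemma z8 : zeta8 ^+ 8 = 1.
Proof. by rewrite (exprM _ 4 2) z4 sqrrN expr1n. Qed.
Lemma zinZp k : zeta8 ^+ val (inZp k : 'Z_8) = zeta8 ^+ k.
Proof.
change (zeta8 ^+ (k %% 8) = zeta8 ^+ k).
by rewrite {2}(divn_eq k 8) exprD mulnC exprM z8 expr1n mul1r.
Qed.
Lemma sgF2 (R : pzRingType) (r t : 'F_2) : (-1) ^+ val (r + t) = (-1) ^+ val r * (-1) ^+ val t :> R.
Proof.
change ((-1) ^+ ((val r + val t) %% 2) = (-1) ^+ val r * (-1) ^+ val t :> R).
by rewrite modn2 signr_odd exprD.
Qed.

Definition S n (a1 a2 a3 : 'rV['F_2]_n -> 'F_2) (v0 v1 : 'F_2) (u : 'rV['F_2]_n) : int :=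
  \sum_(x | (a1 x == v0) && (a2 x == v1)) (-1) ^+ val (a3 x + dotF2 u x).

Arguments S {n}.
Lemma gWH_S n (a1 a2 a3 : 'rV['F_2]_n -> 'F_2) u :
  gWH (gbfun a1 a2 a3) u = (S a1 a2 a3 0 0 u)%:~R + 'i * (S a1 a2 a3 0 1 u)%:~R
     + zeta8 * (S a1 a2 a3 1 0 u)%:~R + zeta8 * 'i * (S a1 a2 a3 1 1 u)%:~R.
Proof.
rewrite /S /gWH !(big_mkcond (fun x => (a1 x == _) && _)) /= !rmorph_sum !mulr_sumr -!big_split.
apply: eq_bigr => x _; rewrite /gbfun.
move: (a1 x) (a2 x) (a3 x) (dotF2 u x) => p q r t.
rewrite zinZp exprD exprD (exprM _ 2) (exprM _ 4) z2 z4 /=.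
rewrite (_ : (-1) ^+ ((r + t) %% (Zp_trunc (pdiv 2)).+2) = (-1) ^+ r * (-1) ^+ t :> int); last exact: sgF2.
case: p => [[|[|?]] //= ?]; case: q => [[|[|?]] //= ?]; rewrite ?rmorphM /= ?rmorphXn /= ?rmorphN1 ?rmorph0; ring.
Qed.

Lemma no_sqrt2 (k Y : int) : k*k = 2*(Y*Y) -> Y = 0.
Proof.
suff: forall m (k Y : int), (absz Y <= m)%N -> k*k = 2*(Y*Y) -> Y = 0 by move=> /(_ _ k Y (leqnn _)).
elim=> [|m IH] {}k {}Y hm h; first lia.
have [a [Hk|Hk]] := par k; subst k; last (exfalso; nia).
have [b [HY|HY]] := par Y; subst Y; last (exfalso; nia).
have -> : b = 0 by apply: (IH a b); lia.
by rewrite mulr0.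
Qed.

Lemma alg_core n (a b c d : algC) : a \is Num.real -> b \is Num.real -> c \is Num.real -> d \is Num.real ->
  `|a + 'i * b + zeta8 * c + zeta8 * 'i * d| = sqrtC (2 ^+ n) ->
  (a*a+b*b+c*c+d*d) + sqrtC 2 * (a*(c-d)+b*(c+d)) = 2 ^+ n.
Proof.
move=> ra rb rc rd hn.
set s := sqrtC (2 : algC).
have sn0 : s != 0 := s_neq0.
have ss : s ^+ 2 = 2 := s2.
have sr : s \is Num.real by apply: ger0_real; rewrite sqrtC_ge0 ler0n.
have H1 : a + 'i * b + zeta8 * c + zeta8 * 'i * d = (a + (c - d) / s) + 'i * (b + (c + d) / s).
  apply/eqP; rewrite -subr_eq0; apply/eqP.
  rewrite (_ : _ - _ = ('i ^+ 2 + 1) * (d / s)); first by rewrite sqrCi addNr mul0r.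
  rewrite /zeta8 -/s; field; exact: sn0.
have H2 : (a + (c - d) / s) ^+ 2 + (b + (c + d) / s) ^+ 2
   = (a*a+b*b+c*c+d*d) + s * (a*(c-d)+b*(c+d)).
  apply/eqP; rewrite -subr_eq0; apply/eqP.
  rewrite (_ : _ - _ = (2 - s ^+ 2) * (s * (a*(c-d)+b*(c+d)) + c*c + d*d) / s ^+ 2); first by rewrite ss subrr mul0r mul0r.
  field; exact: sn0.
have : `|a + 'i * b + zeta8 * c + zeta8 * 'i * d| ^+ 2 = 2 ^+ n by rewrite hn sqrtCK.
rewrite H1 normC2_rect ?H2 //.
- apply: rpredD => //; apply: rpredM; [exact: rpredB | by rewrite rpredV].
- apply: rpredD => //; apply: rpredM; [exact: rpredD | by rewrite rpredV].
Qed.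

Lemma gbent_int n (A B C D : int) :
  `|A%:~R + 'i * B%:~R + zeta8 * C%:~R + zeta8 * 'i * D%:~R : algC| = sqrtC (2 ^+ n) ->
  A*A+B*B+C*C+D*D = 2 ^+ n /\ A*(C-D)+B*(C+D) = 0.
Proof.
have ra : forall z : int, (z%:~R : algC) \is Num.real by move=> z; apply: Rreal_int; exact: intr_int.
move=> /(@alg_core n _ _ _ _ (ra A) (ra B) (ra C) (ra D)) hE.
have keyq : forall p q K : algC, q + sqrtC 2 * p = K -> (K - q) * (K - q) = 2 * (p * p).
  by move=> p q K <-; rewrite (addrC q) addrK mulrACA -[sqrtC 2 * sqrtC 2]expr2 s2.
have hY : A*(C-D)+B*(C+D) = 0.
  apply: (@no_sqrt2 (2 ^+ n - (A*A+B*B+C*C+D*D))); apply: (@intr_inj algC).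
  rewrite !rmorphM !rmorphB !rmorphD !rmorphM !rmorphD /= rmorphXn /=.
  have e2 : ((2 : int)%:~R : algC) = 2 by [].
  rewrite e2 ?rmorphN ?rmorph1 -[1 + 1 : algC]/(2 : algC); exact: keyq _ _ _ hE.
split=>//; apply: (@intr_inj algC).
have hY' : (A%:~R * (C%:~R - D%:~R) + B%:~R * (C%:~R + D%:~R) : algC) = 0.
  move: (congr1 (fun z : int => (z%:~R : algC)) hY) => /=; rewrite !rmorphD !rmorphM !rmorphB !rmorphD rmorph0; exact.
rewrite hY' mulr0 addr0 in hE.
rewrite !rmorphD !rmorphM hE rmorphXn.
done.
Qed.

Lemma F2cases (a : 'F_2) : a = 0 \/ a = 1.
Proof. case: a => [[|[|?]] // ?]; [left|right]; exact: val_inj. Qed.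

Lemma dotF2D m (c y e : 'rV['F_2]_m) : dotF2 c (y + e) = dotF2 c y + dotF2 c e.
Proof. rewrite /dotF2 -big_split /=; apply: eq_bigr => i _; by rewrite mxE mulrDr. Qed.

Lemma dotF2_delta m (c : 'rV['F_2]_m) i : dotF2 c (delta_mx 0 i) = c 0 i.
Proof.
rewrite /dotF2 (bigD1 i) //= mxE !eqxx mulr1 big1 ?addr0 // => j /negPf ji.
by rewrite mxE ji andbF mulr0.
Qed.

Lemma charsum m (c : 'rV['F_2]_m) :
  \sum_(y : 'rV['F_2]_m) (-1) ^+ val (dotF2 c y) = if c == 0 then (2 ^+ m : int) else 0.
Proof.
case: eqP => [->|/eqP cn0].
  rewrite (eq_bigr (fun _ => 1)); last first.
    by move=> y _; rewrite /dotF2 big1 // => i _; rewrite mxE mul0r.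
  by rewrite sumr_const card_mx card_Fp // mul1n -natrX.
have [i ci] : exists i, c 0 i != 0.
  apply/existsP; apply: contraR cn0 => /existsPn h; apply/eqP/rowP => j.
  by rewrite mxE; apply/eqP; have := h j; rewrite negbK.
have ci1 : c 0 i = 1 by case: (F2cases (c 0 i)) ci => -> //; rewrite eqxx.
set Sm := \sum_y _.
have : Sm = - Sm.
  rewrite {1}/Sm (reindex (fun y => y + delta_mx 0 i)) /=; last first.
    have dd : delta_mx 0 i + delta_mx 0 i = 0 :> 'rV['F_2]_m.
      apply/rowP => j; rewrite !mxE; case: (_ && _) => /=; [exact: val_inj | exact: addr0].
    by apply: onW_bij; exists (fun y => y + delta_mx 0 i) => y; rewrite -addrA dd addr0.
  rewrite /Sm -sumrN; apply: eq_bigr => y _.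
  by rewrite dotF2D dotF2_delta ci1 sgF2 expr1 mulrN1.
lia.
Qed.

Lemma sum_row_mx n (F : 'rV['F_2]_(n + 2) -> int) :
  \sum_z F z = \sum_(x : 'rV['F_2]_n) \sum_(y : 'rV['F_2]_2) F (row_mx x y).
Proof.
rewrite pair_big /=.
rewrite (reindex (fun p : 'rV['F_2]_n * 'rV['F_2]_2 => row_mx p.1 p.2)) //=.
apply: onW_bij; exists (fun z => (lsubmx z, rsubmx z)) => [[x y]|z] /=.
  by rewrite row_mxKl row_mxKr.
by rewrite hsubmxK.
Qed.

Lemma dotF2_row_mx n (w : 'rV['F_2]_(n + 2)) x y :
  dotF2 w (row_mx x y) = dotF2 (lsubmx w) x + dotF2 (rsubmx w) y.
Proof.
rewrite /dotF2 big_split_ord /=; congr (_ + _); apply: eq_bigr => i _;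
  by rewrite ?row_mxEl ?row_mxEr !mxE.
Qed.

Lemma dot2 (v y : 'rV['F_2]_2) : dotF2 v y = v 0 0 * y 0 0 + v 0 1 * y 0 1.
Proof. rewrite /dotF2 !big_ord_recl big_ord0 /= addr0. by rewrite (_ : lift ord0 ord0 = 1 :> 'I_2) //; apply: val_inj. Qed.

Lemma sum2 (p q : 'F_2) :
  \sum_(y : 'rV['F_2]_2) (-1) ^+ val (p * y 0 0 + q * y 0 1) = if (p == 0) && (q == 0) then 4 else 0 :> int.
Proof.
set c : 'rV['F_2]_2 := \row_j (if j == 0 then p else q).
rewrite (eq_bigr (fun y => (-1) ^+ val (dotF2 c y))); last first.
  by move=> y _; rewrite dot2 !mxE.
rewrite charsum.
have -> : (c == 0) = (p == 0) && (q == 0).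
  apply/eqP/andP => [h|[/eqP hp /eqP hq]].
    by split; apply/eqP; [have := congr1 (fun M : 'rV['F_2]_2 => M 0 0) h | have := congr1 (fun M : 'rV['F_2]_2 => M 0 1) h]; rewrite !mxE.
  by apply/rowP => j; rewrite !mxE; case: (j == 0).
by case: (_ && _).
Qed.

Lemma addF2_eq0 (a b : 'F_2) : (a + b == 0) = (a == b).
Proof. by case: (F2cases a) => ->; case: (F2cases b) => ->. Qed.

Lemma WH_gray n (a1 a2 a3 : 'rV['F_2]_n -> 'F_2) w :
  WH (gray a1 a2 a3) w = 4 * S a1 a2 a3 (rsubmx w 0 0) (rsubmx w 0 1) (lsubmx w).
Proof.
rewrite /WH sum_row_mx /S mulr_sumr [RHS]big_mkcond /=; apply: eq_bigr => x _.
set v := rsubmx w; set u := lsubmx w.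
have e : forall y : 'rV['F_2]_2, gray a1 a2 a3 (row_mx x y) + dotF2 w (row_mx x y)
   = (a3 x + dotF2 u x) + ((a1 x + v 0 0) * y 0 0 + (a2 x + v 0 1) * y 0 1).
  by move=> y; rewrite /gray row_mxKl row_mxKr dotF2_row_mx dot2; ring.
rewrite (eq_bigr _ (fun y _ => congr1 (fun t => (-1) ^+ val t : int) (e y))).
under eq_bigr => y _ do rewrite sgF2.
rewrite -mulr_sumr sum2 !addF2_eq0.
by case: (_ && _); rewrite ?mulr0 ?mulr1 // mulrC.
Qed.

Theorem mainTheorem11 (n : nat) (a1 a2 a3 : 'rV['F_2]_n -> 'F_2) :
  gbent (gbfun a1 a2 a3) -> semibent (gray a1 a2 a3).
Proof.
move=> gb.
have key : forall w, `|WH (gray a1 a2 a3) w| = 0 \/ `|WH (gray a1 a2 a3) w| = 2 ^+ (n./2 + 2).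
  move=> w; rewrite WH_gray normrM exprD.
  have := gb (lsubmx w); rewrite gWH_S => /gbent_int [h1 h2].
  have [PA [PB [PC PD]]] := @four_sq n _ _ _ _ h1 h2.
  have n4 : `|4| = 4 :> int by [].
  have e4 : 2 ^+ 2 = 4 :> int by [].
  rewrite n4 e4.
  case: (F2cases (rsubmx w 0 0)) => ->; case: (F2cases (rsubmx w 0 1)) => ->;
  [move: PA | move: PB | move: PC | move: PD]; rewrite /P2; lia.
rewrite /semibent /plateaued; case: ifP => hodd w; rewrite -t2.
- have -> : ((n + 2 + 1) %/ 2 = n./2 + 2)%N by rewrite -divn2; move: hodd; rewrite oddD /=; lia.
  exact: key.
- have -> : ((n + 2 + 2) %/ 2 = n./2 + 2)%N by rewrite -divn2; move: hodd; rewrite oddD /=; lia.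
  exact: key.
Qed.
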